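(* In the standing setting, with $\mathbf K_1,\mathbf K_2$ constant symmetric positive definite and the control law $\mathbf u(t)=-(\mathbf I_3+\mathbf K_2\mathbf K_1)\mathbf z_1(t)-(\mathbf K_1+\mathbf K_2)\mathbf z_2(t)-\mathbf f_a(t,\mathbf z_1(t))$, let $t_s>0$, let $$\mathbf X=\begin{bmatrix}\mathbf I_3+\mathbf K_1\mathbf K_1 & \mathbf K_1\\ \mathbf K_1&\mathbf I_3\end{bmatrix},\qquad r=\min_{j=1,\dots,P,\ t\in[0,t_s]}\|\mathbf w_j(t)\|,$$ and define the open ellipsoid $\mathcal E=\{\mathbf y\in\mathbb R^6:\mathbf y^T\mathbf X\mathbf y<\lambda_{\min}(\mathbf X)r^2\}$. Then $\mathcal E\subset\mathcal D(t)$ for all $t\in[0,t_s]$, every closed-loop trajectory with $\mathbf z_0\in\mathcal E$ remains in $\mathcal E$ for all $t\in[0,t_s]$, and there exist constants $c_1,c_2>0$ (depending only on $\mathbf K_1,\mathbf K_2$) such that $\|\mathbf z(t)\|\le c_1\|\mathbf z_0\|e^{-c_2t}$ for all $t\in[0,t_s]$ and all $\mathbf z_0\in\mathcal E$.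
   Context: Standing setting: Let $P\ge1$. For $j=1,\dots,P$ let $\mu_j>0$ and let $\mathbf r_j:[0,\infty)\to\mathbb R^3$ be continuously differentiable, with $\mathbf r_1\equiv\mathbf 0$. Let $\mathbf r^*:[0,\infty)\to\mathbb R^3$ be continuously differentiable (the target trajectory) with $\mathbf r^*(t)\neq\mathbf r_j(t)$ for all $t\ge0$ and all $j$, and set $\mathbf w_j(t):=\mathbf r_j(t)-\mathbf r^*(t)$. For $t\ge0$ and $\mathbf z_1\in\mathbb R^3$ with $\mathbf z_1\ne\mathbf w_j(t)$ for all $j$, define $$\mathbf f_a(t,\mathbf z_1)=\sum_{j=1}^P\mu_j\left(\frac{\mathbf w_j(t)-\mathbf z_1}{\|\mathbf w_j(t)-\mathbf z_1\|^3}-\frac{\mathbf w_j(t)}{\|\mathbf w_j(t)\|^3}\right).$$ The controlled error dynamics are $\dot{\mathbf z}_1(t)=\mathbf z_2(t)$, $\dot{\mathbf z}_2(t)=\mathbf f_a(t,\mathbf z_1(t))+\mathbf u(t)$, with state $\mathbf z=(\mathbf z_1,\mathbf z_2)\in\mathbb R^6$, control $\mathbf u(t)\in\mathbb R^3$, initial time $0$ and $\mathbf z_0:=\mathbf z(0)$. The vector field is defined on $\mathcal D(t)=\{(\mathbf x,\mathbf y)\in\mathbb R^6:\mathbf x\neq\mathbf w_j(t),\ j=1,\dots,P\}$. $\|\cdot\|$ is the Euclidean norm, $\lambda_{\min},\lambda_{\max}$ denote smallest/largest eigenvalues. Note $r>0$ since the $\mathbf w_j$ are continuous and nonvanishing on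 $[0,t_s]$. *)

(* Defs.v *)
From HB Require Import structures.
From mathcomp Require Import all_boot all_order all_algebra.
From mathcomp Require Import all_classical all_reals all_analysis.
Set Implicit Arguments. Unset Strict Implicit. Unset Printing Implicit Defensive.
Import Order.TTheory GRing.Theory Num.Theory.
Import numFieldNormedType.Exports.
Local Open Scope classical_set_scope.
Local Open Scope ring_scope.

Section Defs.
Variable R : realType.

Definition enorm n (v : 'cV[R]_n) : R := Num.sqrt (\sum_i (v i ord0) ^+ 2).

Definition qform n (M : 'M[R]_n) (v : 'cV[R]_n) : R := (v^T *m M *m v) ord0 ord0.

Definition sym_posdef n (M : 'M[R]_n) : Prop :=
  M^T = M /\ forall v : 'cV[R]_n, v != 0 -> 0 < qform M v.

Definition is_lambda_min n (M : 'M[R]_n) (lam : R) : Prop :=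
  eigenvalue M lam /\ forall mu, eigenvalue M mu -> lam <= mu.

(* f has derivative d at t, relative to the set A (one-sided at endpoints) *)
Definition has_deriv_within n (A : set R) (f : R -> 'cV[R]_n) (t : R)
    (d : 'cV[R]_n) : Prop :=
  (fun h : R => h^-1 *: (f (t + h) - f t))
    @ (within (fun h => A (t + h)) ((0 : R)^')) --> d.

Definition C1_nonneg n (f : R -> 'cV[R]_n) : Prop :=
  exists g : R -> 'cV[R]_n,
    {within `[0, +oo[, continuous g} /\
    forall t, 0 <= t -> has_deriv_within `[0, +oo[ f t (g t).

Definition f_a (P : nat) (mu : 'I_P -> R) (w : 'I_P -> R -> 'cV[R]_3)
    (t : R) (z1 : 'cV[R]_3) : 'cV[R]_3 :=
  \sum_(j < P) mu j *:
    ((enorm (w j t - z1) ^+ 3)^-1 *: (w j t - z1)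
     - (enorm (w j t) ^+ 3)^-1 *: w j t).

Definition domD (P : nat) (w : 'I_P -> R -> 'cV[R]_3) (t : R) : set 'cV[R]_(3 + 3) :=
  [set y | forall j, usubmx y != w j t].

Definition Xmat (K1 : 'M[R]_3) : 'M[R]_(3 + 3) :=
  block_mx (1%:M + K1 *m K1) K1 K1 1%:M.

Definition control (P : nat) (mu : 'I_P -> R) (w : 'I_P -> R -> 'cV[R]_3)
    (K1 K2 : 'M[R]_3) (t : R) (z1 z2 : 'cV[R]_3) : 'cV[R]_3 :=
  - ((1%:M + K2 *m K1) *m z1) - ((K1 + K2) *m z2) - f_a mu w t z1.

End Defs.

(* Main.v *)
Require Import Defs.
From HB Require Import structures.
From mathcomp Require Import all_boot all_order all_algebra.
From mathcomp Require Import all_classical all_reals all_analysis.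
From mathcomp Require Import ring lra.
Import Order.TTheory GRing.Theory Num.Theory.
Import numFieldNormedType.Exports.
Local Open Scope classical_set_scope.
Local Open Scope ring_scope.
Set Implicit Arguments. Unset Strict Implicit. Unset Printing Implicit Defensive.

Section LA.
Variable R : realType.

Definition nsq n (v : 'cV[R]_n) : R := \sum_i (v i ord0) ^+ 2.
Definition bil n (M : 'M[R]_n) (u v : 'cV[R]_n) : R := (u^T *m M *m v) ord0 ord0.
Definition dot n (u v : 'cV[R]_n) : R := \sum_i u i ord0 * v i ord0.

Lemma mxDE m n (A B : 'M[R]_(m, n)) i j : (A + B) i j = A i j + B i j.
Proof. by rewrite mxE. Qed.
Lemma mxNE m n (A : 'M[R]_(m, n)) i j : (- A) i j = - A i j.
Proof. by rewrite mxE. Qed.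
Lemma mxBE m n (A B : 'M[R]_(m, n)) i j : (A - B) i j = A i j - B i j.
Proof. by rewrite !mxE. Qed.

Lemma bil_dot n (M : 'M[R]_n) u v : bil M u v = dot u (M *m v).
Proof. by rewrite /bil -mulmxA mxE; apply: eq_bigr => i _; rewrite mxE. Qed.

Lemma nsq_dot n (v : 'cV[R]_n) : nsq v = dot v v.
Proof. by apply: eq_bigr => i _; rewrite expr2. Qed.

Lemma nsq_bil n (v : 'cV[R]_n) : nsq v = bil 1%:M v v.
Proof. by rewrite bil_dot mul1mx nsq_dot. Qed.

Lemma dotC n (u v : 'cV[R]_n) : dot u v = dot v u.
Proof. by apply: eq_bigr => i _; rewrite mulrC. Qed.

Lemma dotDr n (u v w : 'cV[R]_n) : dot u (v + w) = dot u v + dot u w.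
Proof. by rewrite /dot -big_split; apply: eq_bigr => i _; rewrite mxE mulrDr. Qed.

Lemma dotNr n (u v : 'cV[R]_n) : dot u (- v) = - dot u v.
Proof. by rewrite /dot -sumrN; apply: eq_bigr => i _; rewrite mxE mulrN. Qed.

Lemma dotZr n (u v : 'cV[R]_n) c : dot u (c *: v) = c * dot u v.
Proof. by rewrite /dot mulr_sumr; apply: eq_bigr => i _; rewrite mxE mulrCA. Qed.

Lemma dotDl n (u v w : 'cV[R]_n) : dot (v + w) u = dot v u + dot w u.
Proof. by rewrite dotC dotDr !(dotC u). Qed.
Lemma dotNl n (u v : 'cV[R]_n) : dot (- v) u = - dot v u.
Proof. by rewrite dotC dotNr dotC. Qed.
Lemma dotZl n (u v : 'cV[R]_n) c : dot (c *: v) u = c * dot v u.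
Proof. by rewrite dotC dotZr dotC. Qed.

Lemma dot_trmx n (M : 'M[R]_n) u v : dot u (M *m v) = dot (M^T *m u) v.
Proof.
rewrite /dot; under eq_bigr do rewrite mxE big_distrr.
under [RHS]eq_bigr do rewrite mxE big_distrl.
rewrite exchange_big; apply: eq_bigr => i _; apply: eq_bigr => j _.
by rewrite mxE /= mulrCA mulrA.
Qed.

Lemma nsq_ge0 n (v : 'cV[R]_n) : 0 <= nsq v.
Proof. by apply: sumr_ge0 => i _; rewrite sqr_ge0. Qed.

Lemma enorm_sq n (v : 'cV[R]_n) : enorm v ^+ 2 = nsq v.
Proof. by rewrite /enorm sqr_sqrtr // nsq_ge0. Qed.

Lemma enorm_ge0 n (v : 'cV[R]_n) : 0 <= enorm v.
Proof. by rewrite /enorm sqrtr_ge0. Qed.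

Lemma sq_le_nsq n (v : 'cV[R]_n) i : v i ord0 ^+ 2 <= nsq v.
Proof.
rewrite /nsq (bigD1 i) //= lerDl; apply: sumr_ge0 => j _; exact: sqr_ge0.
Qed.

Lemma qform_le n (M : 'M[R]_n) v :
  qform M v <= (\sum_i \sum_j `|M i j|) * nsq v.
Proof.
rewrite /qform -mulmxA mxE.

rewrite big_distrl; apply: ler_sum => i _ /=.
rewrite [(M *m v) _ _]mxE [v^T _ _]mxE mulr_sumr big_distrl /=; apply: ler_sum => j _.
have h1 := sq_le_nsq v i; have h2 := sq_le_nsq v j.
have h3 : v i ord0 * v j ord0 <= nsq v.
  nra.
have h4 : - nsq v <= v i ord0 * v j ord0.
  nra.
have := normr_ge0 (M i j).
case: (lerP 0 (M i j)) => hM.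
  by rewrite ger0_norm //; nra.
by rewrite ltr0_norm //; nra.
Qed.

Lemma nsq_sub_le n (a b : 'cV[R]_n) : nsq (a - b) <= 2 * nsq a + 2 * nsq b.
Proof.
rewrite /nsq !mulr_sumr -big_split; apply: ler_sum => i _.
rewrite mxBE; have h := sqr_ge0 (a i ord0 + b i ord0).
apply: (le_trans (y := 2 * a i ord0 ^+ 2 + 2 * b i ord0 ^+ 2)) => //; nra.
Qed.

Lemma qform_dot n (M : 'M[R]_n) v : qform M v = dot v (M *m v).
Proof. exact: bil_dot. Qed.

Lemma posdef_unit n (K : 'M[R]_n) : sym_posdef K -> K \in unitmx.
Proof.
move=> [Ks Kp]; rewrite -row_free_unit -kermx_eq0; apply/negP => nz.
have : eigenvalue K 0.
  rewrite /eigenvalue /eigenspace (_ : (0 : R)%:M = 0 :> 'M[R]_n) ?subr0.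
    by apply/negP.
  by apply/matrixP => i j; rewrite !mxE mul0rn.
case/eigenvalueP => x xK x0.
have Kw : K *m x^T = 0 by rewrite -{1}Ks -trmx_mul xK scale0r linear0.
have w0 : x^T != 0 by rewrite trmx_eq0.
have := Kp _ w0; rewrite /qform -mulmxA Kw mulmx0 mxE ltxx //.
Qed.

Lemma qform_ge0 n (K : 'M[R]_n) v : sym_posdef K -> 0 <= qform K v.
Proof.
move=> [_ Kp]; have [->|v0] := eqVneq v 0.
  by rewrite /qform mulmx0 mxE.
exact/ltW/Kp.
Qed.

Lemma posdef_lb n (K : 'M[R]_n) : sym_posdef K ->
  exists2 k, 0 < k & forall v, k * nsq v <= qform K v.
Proof.
move=> PK; have Ku := posdef_unit PK; have [Ks Kp] := PK.
set Mi := \sum_i \sum_j `|invmx K i j|.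
have Mi0 : 0 <= Mi by apply: sumr_ge0 => i _; apply: sumr_ge0 => j _.
have s0 : 0 < (Mi + 1)^-1 by rewrite invr_gt0; lra.
exists (Mi + 1)^-1 => // v.
set s := (Mi + 1)^-1; set u := invmx K *m v.
have Ku1 : K *m u = v by rewrite /u mulmxA mulmxV // mul1mx.
have Hq := qform_ge0 (v - s *: u) PK.
have E1 : qform K (v - s *: u) = qform K v - 2 * s * nsq v + s ^+ 2 * dot u v.
  rewrite !qform_dot mulmxBr -scalemxAr Ku1 dotDl dotNl dotZl !dotDr !dotNr !dotZr.
  have -> : dot u (K *m v) = nsq v by rewrite dot_trmx Ks Ku1 nsq_dot.
  rewrite -nsq_dot; ring.
have E3 : dot u v <= Mi * nsq v.
  by rewrite dotC /u -qform_dot; apply: qform_le.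
have hs : s * (Mi + 1) = 1 by rewrite /s mulVf // gt_eqF // ltr_wpDl.
have n0 := nsq_ge0 v.
have hsM : s * Mi <= 1 by nra.
rewrite E1 in Hq.
have : s ^+ 2 * dot u v <= s * nsq v.
  have : s ^+ 2 * dot u v <= s ^+ 2 * (Mi * nsq v) by apply: ler_wpM2l => //; rewrite sqr_ge0.
  have h5 : (s * nsq v) * (s * Mi) <= (s * nsq v) * 1.
    by apply: ler_wpM2l => //; apply: mulr_ge0 => //; apply: ltW.
  have -> : s ^+ 2 * (Mi * nsq v) = (s * nsq v) * (s * Mi) by ring.
  by rewrite mulr1 in h5 => h6; apply: le_trans h6 h5.
lra.
Qed.

Lemma qform_Xmat (K1 : 'M[R]_3) (a b : 'cV[R]_3) : K1^T = K1 ->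
  qform (Xmat K1) (col_mx a b) = nsq a + nsq (K1 *m a + b).
Proof.
move=> Ks; rewrite /qform /Xmat tr_col_mx mul_row_block mul_row_col !nsq_bil /bil.
rewrite !mulmx1 [(_ + b)^T]raddfD /= trmx_mul Ks !mulmxDl !mulmxDr !mulmxA !mulmx1 !mxDE.
rewrite mulmxDl mxDE; lra.
Qed.

Lemma enorm_col m (a b : 'cV[R]_m) : enorm (col_mx a b) ^+ 2 = nsq a + nsq b.
Proof.
rewrite enorm_sq /nsq big_split_ord /=; congr (_ + _); apply: eq_bigr => i _.
  by rewrite col_mxEu.
by rewrite col_mxEd.
Qed.

Lemma char_polyE n (A : 'M[R]_n) x : (char_poly A).[x] = \det (x%:M - A).
Proof.
rewrite -horner_evalE /char_poly -det_map_mx; congr (\det _).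
apply/matrixP => i j; rewrite !mxE /=. by rewrite horner_evalE; case: (i == j); rewrite /= ?hornerE.
Qed.

Lemma det_Xmat (K1 : 'M[R]_3) : \det (Xmat K1) = 1.
Proof.
have -> : Xmat K1 = block_mx 1%:M K1 0 1%:M *m block_mx 1%:M 0 K1 1%:M.
  by rewrite mulmx_block !mul1mx !mulmx1 !mul0mx ?mulmx0 ?addr0 ?add0r.
by rewrite det_mulmx det_ublock det_lblock !det1 !mulr1.
Qed.

Lemma det_1subXmat (K1 : 'M[R]_3) : \det (1%:M - Xmat K1) = - (\det K1) ^+ 2.
Proof.
set L : 'M[R]_(3 + 3) := block_mx 1%:M 0 (- 1%:M) 1%:M.
set U : 'M[R]_(3 + 3) := block_mx 1%:M 1%:M 0 1%:M.
have dL : \det L = 1 by rewrite det_lblock !det1 mulr1.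
have dU : \det U = 1 by rewrite det_ublock !det1 mulr1.
have E : U *m (L *m (1%:M - Xmat K1)) = block_mx (- K1) 0 (K1 *m K1 - K1) K1.
  rewrite /U /L /Xmat (scalar_mx_block 3 3) opp_block_mx add_block_mx.
  rewrite !mulmx_block !mul1mx !mul0mx !add0r !addr0.
  congr block_mx.
  - by rewrite mulNmx mul1mx addNKr.
  - by rewrite mulNmx mul1mx opprK subrr addr0 addNr.
  - by rewrite mulNmx mul1mx opprB [1%:M + _]addrC addrK.
  - by rewrite mulNmx mul1mx opprK subrr addr0.
have := congr1 determinant E.
rewrite !det_mulmx dL dU !mul1r det_lblock => ->.
rewrite -scaleN1r detZ; ring.
Qed.

Lemma lam_le1 (K1 : 'M[R]_3) lam : is_lambda_min (Xmat K1) lam -> lam <= 1.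
Proof.
move=> [_ hmin].
have p0 : (char_poly (Xmat K1)).[0] = 1.
  rewrite char_polyE (_ : (0 : R)%:M = 0 :> 'M[R]_(3 + 3)); last first.
    by apply/matrixP => i j; rewrite !mxE mul0rn.
  by rewrite sub0r -scaleN1r detZ det_Xmat mulr1 -signr_odd.
have p1 : (char_poly (Xmat K1)).[1] <= 0.
  rewrite char_polyE det_1subXmat oppr_le0; exact: sqr_ge0.
have [x /andP[x0 x1] rx] : exists2 x, 0 <= x <= 1 & root (- char_poly (Xmat K1)) x.
  apply: Num.Theory.poly_ivt; first exact: ler01.
  by rewrite !hornerN p0 oppr_ge0 p1 andbT lerN10.
have : eigenvalue (Xmat K1) x.
  rewrite eigenvalue_root_char; move: rx; rewrite /root hornerN oppr_eq0 //.
by move/hmin => h; apply: le_trans h x1.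
Qed.
End LA.

Section AN.
Variable R : realType.

Definition Fw (A : set R) (t : R) := within (fun h : R => A (t + h)) (0 : R)^'.
Definition sderiv (A : set R) (f : R -> R) (t d : R) :=
  (fun h => h^-1 * (f (t + h) - f t)) @ Fw A t --> d.

Lemma Fw_ball A t (P : set R) : (exists2 e : R, 0 < e & forall h, `|h| < e -> h != 0 -> A (t + h) -> P h) -> Fw A t P.
Proof.
move=> [e e0 He]; rewrite /Fw /within /dnbhs /within /=.
apply/nbhs_ballP; exists e => // h; rewrite /ball /= sub0r normrN => hl hn.
exact: He.
Qed.

Lemma Fw_ballP A t (P : set R) : Fw A t P -> exists2 e : R, 0 < e & forall h, `|h| < e -> h != 0 -> A (t + h) -> P h.
Proof.
rewrite /Fw /within /dnbhs /within /= => /nbhs_ballP [e e0 He]; exists e => // h hl hn hA.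
by apply: He => //; rewrite /ball /= sub0r normrN.
Qed.

Instance Fw_filter A t : Filter (Fw A t).
Proof. rewrite /Fw; apply: within_filter. Qed.

Lemma Fw_neq0 A t : \forall h \near Fw A t, h != 0.
Proof. by apply: Fw_ball; exists 1 => // h _ ->. Qed.

Lemma Fw_id0 A t : (fun h : R => h) @ Fw A t --> 0.
Proof.
apply/cvgrPdist_lt => e e0; apply: Fw_ball; exists e => // h hl _ _.
by rewrite sub0r normrN.
Qed.

Lemma sd_cont A f t d : sderiv A f t d -> (fun h => f (t + h)) @ Fw A t --> f t.
Proof.
move=> H.
have E : \forall h \near Fw A t, f t + h * (h^-1 * (f (t + h) - f t)) = f (t + h).
  apply: filterS (Fw_neq0 A t) => h hn.
  by rewrite mulrA mulfV // mul1r addrC subrK.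
have H2 : (fun h => f t + h * (h^-1 * (f (t + h) - f t))) @ Fw A t --> f t + 0 * d.
  apply: cvgD; first exact: cvg_cst.
  apply: cvgM => //; exact: Fw_id0.
rewrite mul0r addr0 in H2.
exact: cvg_trans (near_eq_cvg E) H2.
Qed.

Lemma sd_add A f g t df dg : sderiv A f t df -> sderiv A g t dg ->
  sderiv A (fun s => f s + g s) t (df + dg).
Proof.
move=> Hf Hg; rewrite /sderiv.
have -> : (fun h => h^-1 * (f (t + h) + g (t + h) - (f t + g t))) =
  (fun h => h^-1 * (f (t + h) - f t) + h^-1 * (g (t + h) - g t)).
  by apply/funext => h; ring.
exact: cvgD.
Qed.

Lemma sd_scale A f t df c : sderiv A f t df -> sderiv A (fun s => c * f s) t (c * df).
Proof.
move=> Hf; rewrite /sderiv.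
have -> : (fun h => h^-1 * (c * f (t + h) - c * f t)) =
  (fun h => c * (h^-1 * (f (t + h) - f t))).
  by apply/funext => h; ring.
apply: cvgM => //; exact: cvg_cst.
Qed.

Lemma sd_cst A t c : sderiv A (fun _ => c) t 0.
Proof.
rewrite /sderiv (_ : (fun h => h^-1 * (c - c)) = fun _ => 0); first exact: cvg_cst.
by apply/funext => h; rewrite subrr mulr0.
Qed.

Lemma sd_mul A f g t df dg : sderiv A f t df -> sderiv A g t dg ->
  sderiv A (fun s => f s * g s) t (df * g t + f t * dg).
Proof.
move=> Hf Hg; rewrite /sderiv.
have -> : (fun h => h^-1 * (f (t + h) * g (t + h) - f t * g t)) =
  (fun h => h^-1 * (f (t + h) - f t) * g (t + h) + f t * (h^-1 * (g (t + h) - g t))).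
  by apply/funext => h; ring.
apply: cvgD; apply: cvgM; first [exact: Hf|exact: Hg|exact: (sd_cont Hg)|exact: cvg_cst].
Qed.

Lemma sd_sum A (I : Type) (r : seq I) (F : I -> R -> R) dF t :
  (forall i, sderiv A (F i) t (dF i)) ->
  sderiv A (fun s => \sum_(i <- r) F i s) t (\sum_(i <- r) dF i).
Proof.
move=> H; elim: r => [|i r IH].
  rewrite big_nil (_ : (fun s => \sum_(j <- [::]) F j s) = fun _ => 0); first exact: sd_cst.
  by apply/funext => s; rewrite big_nil.
rewrite big_cons (_ : (fun s => \sum_(j <- i :: r) F j s) = fun s => F i s + \sum_(j <- r) F j s).
  exact: sd_add.
by apply/funext => s; rewrite big_cons.
Qed.

Lemma sd_coord A n (f : R -> 'cV[R]_n) t d i :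
  has_deriv_within A f t d -> sderiv A (fun s => f s i ord0) t (d i ord0).
Proof.
move=> H; have := cvg_comp _ _ H (@coord_continuous R n 1 i ord0 d).
rewrite /sderiv (_ : (fun h => h^-1 * (f (t + h) i ord0 - f t i ord0)) =
  (fun M : 'M[R]_(n, 1) => M i ord0) \o (fun h => h^-1 *: (f (t + h) - f t))) //.
by apply/funext => h; rewrite /= !mxE.
Qed.

Lemma sd_of_derive (A : set R) (f : R -> R) (t d : R) : is_derive t 1 f d -> sderiv A f t d.
Proof.
case=> Hd <-; apply: cvg_within_filter.
rewrite (_ : (fun h => h^-1 * (f (t + h) - f t)) =
  (fun h => h^-1 *: ((f \o shift t) (h *: 1) - f t))); last first.
  apply/funext => h; rewrite /=. set u := h%:A. have -> : u = h by rewrite /u /GRing.scale /= mulr1. by rewrite [h + t]addrC.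
exact: Hd.
Qed.

Lemma sd_exp A t c : sderiv A (fun s => expR (c * s)) t (c * expR (c * t)).
Proof.
apply: sd_of_derive.
have h1 : is_derive t 1 (fun s : R => c * s) c.
  have := @is_deriveZ R R R (fun s => s) c t 1 1 (is_derive_id t 1).
  by rewrite /GRing.scale /= mulr1.
have := is_derive1_comp (is_derive_expR (c * t)) h1.
by rewrite mulrC.
Qed.

Lemma sd_bound A f t d : sderiv A f t d -> exists2 e : R, 0 < e &
  forall h, `|h| < e -> A (t + h) -> `|f (t + h) - f t| <= (`|d| + 1) * `|h|.
Proof.
move=> H; have /cvgrPdist_lt /(_ 1 ltr01) := H.
move/Fw_ballP => [e e0 He]; exists e => // h hl hA.
have [->|hn] := eqVneq h 0; first by rewrite addr0 subrr !normr0 mulr0.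
have hq := He h hl hn hA; simpl in hq.
set q := h^-1 * (f (t + h) - f t) in hq.
have hq' : `|q| <= `|d| + 1.
  have -> : q = d - (d - q) by rewrite opprB addrC subrK.
  apply: le_trans (ler_normB _ _) _; rewrite lerD2l; exact: ltW.
have -> : f (t + h) - f t = h * q by rewrite /q mulrA mulfV // mul1r.
rewrite normrM mulrC; apply: ler_wpM2r => //.
Qed.

Lemma sd_conte A f t d : sderiv A f t d -> forall e : R, 0 < e ->
  exists2 del : R, 0 < del & forall h, `|h| < del -> A (t + h) -> `|f (t + h) - f t| < e.
Proof.
move=> H e e0; have [e1 e10 He1] := sd_bound H.
have d1 : 0 < `|d| + 1 by rewrite ltr_wpDl.
exists (Num.min e1 (e / (`|d| + 1))).
  by rewrite lt_min e10 divr_gt0.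
move=> h; rewrite lt_min => /andP[h1 h2] hA.
apply: le_lt_trans (He1 h h1 hA) _.
by rewrite mulrC -ltr_pdivlMr.
Qed.

Lemma Fw_int A t (e0 : R) (P : set R) : 0 < e0 -> (forall h, `|h| < e0 -> A (t + h)) ->
  Fw A t P -> (0 : R)^' P.
Proof.
move=> e00 HA /Fw_ballP [e e1 He]; rewrite /dnbhs /within /=.
apply/nbhs_ballP; exists (Num.min e e0); first by rewrite /= lt_min e1 e00.
move=> h; rewrite /ball /= sub0r normrN lt_min => /andP[h1 h2] hn.
by apply: He => //; apply: HA.
Qed.

Lemma sd_int_cvg A f t d (e0 : R) : 0 < e0 -> (forall h, `|h| < e0 -> A (t + h)) ->
  sderiv A f t d -> (fun h => h^-1 * (f (t + h) - f t)) @ (0 : R)^' --> d.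
Proof.
move=> e00 HA Hd P dP; apply: (Fw_int e00 HA); exact: Hd dP.
Qed.

Lemma itv_cont (W dW : R -> R) ts :
  (forall t, 0 <= t <= ts -> sderiv `[0, ts] W t (dW t)) ->
  forall t0, 0 <= t0 <= ts -> forall e : R, 0 < e -> exists2 del : R, 0 < del &
    forall y, `|y - t0| < del -> 0 <= y <= ts -> `|W y - W t0| < e.
Proof.
move=> HW t0 Ht0 e e0; have [del del0 Hdel] := sd_conte (HW t0 Ht0) e0.
exists del => // y hy Hy.
have := Hdel (y - t0) hy; rewrite addrC subrK; apply.
by rewrite /= in_itv /=.
Qed.

Lemma nonincr (W dW : R -> R) ts : 0 < ts ->
  (forall t, 0 <= t <= ts -> sderiv `[0, ts] W t (dW t)) ->
  (forall t, 0 <= t <= ts -> dW t <= 0) ->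
  forall t, 0 <= t <= ts -> W t <= W 0.
Proof.
move=> ts0 HW Hd t /andP[t0 tts].
have [->|tn] := eqVneq t 0; first by [].
have tp : 0 < t by rewrite lt_def tn t0.
have der : forall x, x \in `]0, t[ -> is_derive x 1 W (dW x).
  move=> x; rewrite in_itv /= => /andP[x0 xt].
  have xts : x < ts by apply: lt_le_trans xt tts.
  have Hx := HW x (ltac:(by rewrite !ltW)).
  have HQ : (fun h => h^-1 * (W (x + h) - W x)) @ (0 : R)^' --> dW x.
    apply: (sd_int_cvg (e0 := Num.min x (ts - x)) _ _ Hx).
      by rewrite lt_min x0 subr_gt0.
    move=> h; rewrite lt_min => /andP[h1 h2]; rewrite /= in_itv /=.
    have := ler_norm h; have := ler_normr h; rewrite ?normrN; move: h1 h2.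
    case: (lerP 0 h) => h0; [rewrite ger0_norm // | rewrite ltr0_norm //]; move=> *; apply/andP; split; lra.
  have HQ' : (fun h => h^-1 *: ((W \o shift x) (h *: 1) - W x)) @ (0 : R)^' --> dW x.
    rewrite (_ : (fun h => h^-1 *: ((W \o shift x) (h *: 1) - W x)) =
      (fun h => h^-1 * (W (x + h) - W x))) //.
    apply/funext => h; rewrite /=. set u := h%:A.
    have -> : u = h by rewrite /u /GRing.scale /= mulr1.
    by rewrite [h + x]addrC.
  apply: DeriveDef; first exact: cvgP HQ'.
  exact: cvg_lim HQ'.
have cont : {within `[0, t], continuous W}.
  apply/continuous_within_itvP => //; split.
  - move=> x; rewrite in_itv /= => /andP[x0 xt].
    apply/cvgrPdist_lt => e e0.
    have Hx0 : 0 <= x <= ts by rewrite !ltW //; apply: lt_le_trans xt tts.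
    have [del del0 Hdel] := itv_cont HW Hx0 e0.
    apply/nbhs_ballP; exists (Num.min del (Num.min x (t - x))).
      by rewrite /= !lt_min del0 x0 subr_gt0.
    move=> y; rewrite /ball /= !lt_min => /andP[y1 /andP[y2 y3]].
    rewrite distrC; apply: Hdel; first by rewrite distrC.
    move: y2 y3; rewrite ltr_norml => /andP[a1 a2] a3.
    move: a3; rewrite ltr_norml => /andP[b1 b2].
    apply/andP; split; lra.
  - apply/cvgrPdist_lt => e e0.
    have Hx0 : (0:R) <= 0 <= ts by apply/andP; split => //; exact: ltW.
    have [del del0 Hdel] := itv_cont HW Hx0 e0.
    rewrite /at_right /within; apply/nbhs_ballP; exists (Num.min del t).
      by rewrite /= lt_min del0 tp.
    move=> y; rewrite /ball /= sub0r normrN lt_min => /andP[y1 y2] ypos.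
    rewrite distrC; apply: Hdel; first by rewrite subr0.
    move: y2; rewrite ltr_norml => /andP[a1 a2]; apply/andP; split; lra.
  - apply/cvgrPdist_lt => e e0.
    have Hx0 : 0 <= t <= ts by apply/andP; split => //; exact: ltW.
    have [del del0 Hdel] := itv_cont HW Hx0 e0.
    rewrite /at_left /within; apply/nbhs_ballP; exists (Num.min del t).
      by rewrite /= lt_min del0 tp.
    move=> y; rewrite /ball /= lt_min => /andP[y1 y2] ylt.
    rewrite distrC; apply: Hdel; first by rewrite distrC.
    move: y2; rewrite ltr_norml => /andP[a1 a2]; apply/andP; split; lra.
have [c cI E] := MVT tp der cont.
move: cI; rewrite in_itv /= => /andP[c0 ct].
have Hc0 : 0 <= c <= ts by rewrite !ltW //; apply: lt_le_trans ct tts.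
have := Hd c Hc0.
rewrite subr0 in E => hc.
have : dW c * t <= 0 by apply: mulr_le0_ge0 => //; exact: ltW.
rewrite -E; lra.
Qed.

Lemma sd_eqd A f t d d' : sderiv A f t d -> d = d' -> sderiv A f t d'.
Proof. by move=> H <-. Qed.

Lemma vd_lin A n (M : 'M[R]_n) (v : R -> 'cV[R]_n) (dv : 'cV[R]_n) t :
  (forall i, sderiv A (fun s => v s i ord0) t (dv i ord0)) ->
  forall i, sderiv A (fun s => (M *m v s) i ord0) t ((M *m dv) i ord0).
Proof.
move=> H i.
rewrite (_ : (fun s => (M *m v s) i ord0) = fun s => \sum_j M i j * v s j ord0); last first.
  by apply/funext => s; rewrite mxE.
rewrite mxE; apply: sd_sum => j; exact: sd_scale.
Qed.

Lemma vd_add A n (u v : R -> 'cV[R]_n) (du dv : 'cV[R]_n) t :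
  (forall i, sderiv A (fun s => u s i ord0) t (du i ord0)) ->
  (forall i, sderiv A (fun s => v s i ord0) t (dv i ord0)) ->
  forall i, sderiv A (fun s => (u s + v s) i ord0) t ((du + dv) i ord0).
Proof.
move=> Hu Hv i.
rewrite (_ : (fun s => (u s + v s) i ord0) = fun s => u s i ord0 + v s i ord0); last first.
  by apply/funext => s; rewrite mxE.
rewrite mxE; exact: sd_add.
Qed.

Lemma sd_nsq A n (v : R -> 'cV[R]_n) (dv : 'cV[R]_n) t :
  (forall i, sderiv A (fun s => v s i ord0) t (dv i ord0)) ->
  sderiv A (fun s => nsq (v s)) t (2 * dot (v t) dv).
Proof.
move=> H.
rewrite (_ : (fun s => nsq (v s)) = fun s => \sum_i v s i ord0 * v s i ord0); last first.
  by apply/funext => s; apply: eq_bigr => i _; rewrite expr2.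
apply: sd_eqd; first by apply: sd_sum => i; apply: sd_mul; apply: H.
rewrite /dot mulr_sumr; apply: eq_bigr => i _; ring.
Qed.

End AN.

Unset Implicit Arguments.
Set Strict Implicit.

Theorem corollary1 (R : realType) (K1 K2 : 'M[R]_3) :
  sym_posdef K1 -> sym_posdef K2 ->
  exists c1 c2 : R, 0 < c1 /\ 0 < c2 /\
  forall (P : nat) (hP : (0 < P)%N) (mu : 'I_P -> R)
         (rj : 'I_P -> R -> 'cV[R]_3) (rstar : R -> 'cV[R]_3),
    (forall j, 0 < mu j) ->
    (forall j, C1_nonneg (rj j)) ->
    (forall t, rj (Ordinal hP) t = 0) ->
    C1_nonneg rstar ->
    (forall t j, 0 <= t -> rstar t != rj j t) ->
    let w := fun j t => rj j t - rstar t in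
    forall (ts : R), 0 < ts ->
    forall r : R,
      (forall j t, 0 <= t <= ts -> r <= enorm (w j t)) ->
      (exists j t, 0 <= t <= ts /\ r = enorm (w j t)) ->
    forall lam : R, is_lambda_min (Xmat K1) lam ->
    let E := [set y : 'cV[R]_(3 + 3) | qform (Xmat K1) y < lam * r ^+ 2] in
    (forall t, 0 <= t <= ts -> E `<=` domD w t) /\
    (forall z1 z2 : R -> 'cV[R]_3,
       let z := fun t => col_mx (z1 t) (z2 t) in
       (forall t, 0 <= t <= ts ->
          has_deriv_within `[0, ts] z1 t (z2 t)) ->
       (forall t, 0 <= t <= ts ->
          has_deriv_within `[0, ts] z2 t
            (f_a mu w t (z1 t) + control mu w K1 K2 t (z1 t) (z2 t))) ->
       E (z 0) ->
       forall t, 0 <= t <= ts ->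
         E (z t) /\ enorm (z t) <= c1 * enorm (z 0) * expR (- (c2 * t))).
Proof.
move=> PK1 PK2.
have [k1 k10 Hk1] := posdef_lb PK1.
have [k2 k20 Hk2] := posdef_lb PK2.
have [K1s _] := PK1.
set kap := Num.min k1 k2.
have kap0 : 0 < kap by rewrite lt_min k10 k20.
have kap1 : kap <= k1 by rewrite ge_min lexx.
have kap2 : kap <= k2 by rewrite ge_min lexx orbT.
set L := \sum_i \sum_j `|(K1^T *m K1) i j|.
set MX := \sum_i \sum_j `|Xmat K1 i j|.
have L0 : 0 <= L by apply: sumr_ge0 => i _; apply: sumr_ge0 => j _.
have MX0 : 0 <= MX by apply: sumr_ge0 => i _; apply: sumr_ge0 => j _.
set C := 2 + 2 * L.
have C0 : 0 < C by rewrite /C; lra.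
exists (Num.sqrt (C * (MX + 1))), kap.
split; first by rewrite sqrtr_gt0; apply: mulr_gt0 => //; lra.
split => //.
move=> P hP mu rj rstar mu0 rjC rj1 rsC rsne w ts ts0 r rle [j0 [t0 [t0I req]]] lam Hlam E.
have lam1 := lam_le1 Hlam.
have r0 : 0 <= r by rewrite req enorm_ge0.
split.
  move=> t tI y Ey j; apply/eqP => eq.
  rewrite /E /= in Ey.
  have yE : y = col_mx (usubmx y) (dsubmx y) by rewrite vsubmxK.
  rewrite yE qform_Xmat // in Ey.
  have := rle j t tI; rewrite -eq => hr.
  have hr2 : r ^+ 2 <= enorm (usubmx y) ^+ 2.
    by rewrite ler_pXn2r // ?nnegrE // enorm_ge0.
  rewrite enorm_sq in hr2.
  have := nsq_ge0 (K1 *m usubmx y + dsubmx y).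
  have := sqr_ge0 r.
  nra.
move=> z1 z2 z Hd1 Hd2 Ez0 t tI.
set e := fun s => K1 *m z1 s + z2 s.
set V := fun s => nsq (z1 s) + nsq (e s).
have VE : forall s, qform (Xmat K1) (z s) = V s by move=> s; rewrite /z qform_Xmat.
set g := fun s => f_a mu w s (z1 s) + control mu w K1 K2 s (z1 s) (z2 s).
have gE : forall s, K1 *m z2 s + g s = - z1 s - K2 *m e s.
  move=> s; rewrite /g /control /e mulmxDl mul1mx mulmxDl mulmxDr -mulmxA.
  by apply/matrixP => i j; rewrite !(mxDE, mxNE); lra.
set dV := fun s => 2 * dot (z1 s) (z2 s) + 2 * dot (e s) (K1 *m z2 s + g s).
have HV : forall s, 0 <= s <= ts -> sderiv `[0, ts] V s (dV s).
  move=> s sI.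
  have d1 := fun i => sd_coord (i:=i) (Hd1 s sI).
  have d2 := fun i => sd_coord (i:=i) (Hd2 s sI).
  have de := vd_add (vd_lin (M:=K1) d1) d2.
  apply: sd_add; [exact: sd_nsq d1| exact: sd_nsq de].
have dVle : forall s, dV s <= - (2 * kap) * V s.
  move=> s; rewrite /dV gE.
  have eE : dot (e s) (z1 s) = dot (z1 s) (K1 *m z1 s) + dot (z1 s) (z2 s).
    by rewrite dotC /e dotDr.
  rewrite !dotDr !dotNr eE -!qform_dot.
  have := Hk1 (z1 s); have := Hk2 (e s); have := nsq_ge0 (z1 s); have := nsq_ge0 (e s).
  rewrite /V; nra.
set a := 2 * kap.
set W := fun s => V s * expR (a * s).
have HW : forall s, 0 <= s <= ts ->
    sderiv `[0, ts] W s (dV s * expR (a * s) + V s * (a * expR (a * s))).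
  move=> s sI; apply: sd_mul; [exact: HV s sI | exact: sd_exp].
have HWle : forall s, 0 <= s <= ts -> dV s * expR (a * s) + V s * (a * expR (a * s)) <= 0.
  move=> s _; have := dVle s; have := expR_gt0 (a * s); rewrite /a; nra.
have Wt := nonincr ts0 HW HWle tI.
have W0 : W 0 = V 0 by rewrite /W mulr0 expR0 mulr1.
rewrite W0 /W in Wt.
have V0ge : 0 <= V 0 by rewrite /V; apply: addr_ge0; apply: nsq_ge0.
have Vtge : 0 <= V t by rewrite /V; apply: addr_ge0; apply: nsq_ge0.
have Vt : V t <= V 0 * expR (- (a * t)).
  have := expRxMexpNx_1 (a * t); have := expR_gt0 (- (a * t)); nra.
have [t0' tts] := andP tI.
have ex1 : expR (- (a * t)) <= 1 by rewrite expR_le1 oppr_le0; apply: mulr_ge0 => //; rewrite /a; lra.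
have Vt1 : V t <= V 0 by have := expR_ge0 (- (a * t)); nra.
split.
  rewrite /E /= VE; rewrite /E /= VE in Ez0; lra.
have nK : forall v, nsq (K1 *m v) <= L * nsq v.
  move=> v; rewrite nsq_dot dot_trmx dotC mulmxA -qform_dot; exact: qform_le.
have h1 : enorm (z t) ^+ 2 <= C * V t.
  rewrite /z enorm_col.
  have z2E : z2 t = e t - K1 *m z1 t by rewrite /e addrAC subrr add0r.
  have := nsq_sub_le (e t) (K1 *m z1 t); rewrite -z2E => hs.
  have := nK (z1 t); have := nsq_ge0 (z1 t); have := nsq_ge0 (e t).
  rewrite /C /V; nra.
have h2 : V 0 <= (MX + 1) * enorm (z 0) ^+ 2.
  rewrite -VE enorm_sq; have := qform_le (Xmat K1) (z 0); have := nsq_ge0 (z 0).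
  rewrite -/MX; nra.
have eE : expR (- (kap * t)) ^+ 2 = expR (- (a * t)).
  by rewrite expr2 -expRD /a; congr expR; ring.
have CM0 : 0 <= C * (MX + 1) by apply: mulr_ge0; lra.
have h3 : enorm (z t) ^+ 2 <=
    (Num.sqrt (C * (MX + 1)) * enorm (z 0) * expR (- (kap * t))) ^+ 2.
  rewrite [X in _ <= X]exprMn [in X in _ <= X]exprMn (sqr_sqrtr CM0) eE.
  apply: le_trans h1 _.
  have hx := expR_ge0 (- (a * t)).
  have k1' : C * V t <= C * (V 0 * expR (- (a * t))) by apply: ler_wpM2l => //; exact: ltW.
  have k2' : V 0 * expR (- (a * t)) <= (MX + 1) * enorm (z 0) ^+ 2 * expR (- (a * t)).
    exact: ler_wpM2r.
  have k3' : C * (V 0 * expR (- (a * t))) <= C * ((MX + 1) * enorm (z 0) ^+ 2 * expR (- (a * t))).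
    by apply: ler_wpM2l => //; exact: ltW.
  apply: le_trans k1' _; apply: le_trans k3' _.
  by rewrite !mulrA.
rewrite -(@ler_pXn2r _ 2) // nnegrE; first exact: enorm_ge0.
by apply: mulr_ge0; [apply: mulr_ge0; [exact: sqrtr_ge0|exact: enorm_ge0]|exact: expR_ge0].
Qed.
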